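(* For any $a,b\in\mathbb{Z}[\tau]$ with $0<a<b<1$, the subgroup $F_\tau[a,b]$ is isomorphic to $F_\tau$.
   Context: Let $\tau=\frac{\sqrt5-1}{2}$ (a root of $X^2+X-1$, a unit of the ring $\mathbb{Z}[\tau]$). $F_\tau$ denotes the group of piecewise linear homeomorphisms of $[0,1]$ with finitely many breakpoints, all breakpoints in $\mathbb{Z}[\tau]$, and all slopes integer powers of $\tau$ (i.e. $G([0,1];\mathbb{Z}[\tau],\langle\tau\rangle)$ in Bieri–Strebel notation). For $a,b\in\mathbb{Z}[\tau]$ with $0<a<b<1$, $F_\tau[a,b]$ denotes the subgroup of $F_\tau$ consisting of those elements whose support is included in $[a,b]$. *)

(* Defs.v *)
From Stdlib Require Import Reals ZArith.
Open Scope R_scope.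

(* tau = (sqrt 5 - 1)/2, a root of X^2 + X - 1 *)
Definition tau : R := (sqrt 5 - 1) / 2.

Definition inZtau (x : R) : Prop :=
  exists m n : Z, x = IZR m + IZR n * tau.

(* f : R -> R represents an element of F_tau: it is the identity outside
   [0,1], fixes 0 and 1, and there is a subdivision
   0 = p 0 < p 1 < ... < p k = 1 with all p i in Z[tau] such that on each
   [p i, p (i+1)] the map f is affine with slope tau^(e i), e i : Z.
   (Subdivision points which are not genuine breakpoints are allowed; this
   is the same group.)  Such f restricted to [0,1] is a continuous
   increasing bijection of [0,1], i.e. a PL homeomorphism. *)
Definition isFtau (f : R -> R) : Prop :=
  (forall x, (x < 0 \/ 1 < x) -> f x = x) /\
  f 0 = 0 /\ f 1 = 1 /\
  exists (k : nat) (p : nat -> R) (e : nat -> Z),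
    p 0%nat = 0 /\ p k = 1 /\
    (forall i, (i < k)%nat -> p i < p (S i)) /\
    (forall i, (i <= k)%nat -> inZtau (p i)) /\
    (forall i x, (i < k)%nat -> p i <= x <= p (S i) ->
        f x = f (p i) + powerRZ tau (e i) * (x - p i)).

(* F_tau[a,b]: elements of F_tau whose support lies in [a,b]
   (the support is the closure of {x | f x <> x}; since [a,b] is closed,
   this is equivalent to {x | f x <> x} being included in [a,b]). *)
Definition isFtau_ab (a b : R) (f : R -> R) : Prop :=
  isFtau f /\ (forall x, f x <> x -> a <= x <= b).

Definition comp_group_iso (G H : (R -> R) -> Prop) (phi : (R -> R) -> (R -> R)) : Prop :=
  (forall f, G f -> H (phi f)) /\
  (forall f g, G f -> G g -> phi f = phi g -> f = g) /\
  (forall h, H h -> exists f, G f /\ phi f = h) /\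
  (forall f g, G f -> G g -> phi (fun x => f (g x)) = (fun x => phi f (phi g x))).

(* Main.v *)
Require Import Defs.
From Stdlib Require Import Reals ZArith Lra Lia Psatz List.
From Stdlib Require Import Classical IndefiniteDescription FunctionalExtensionality.
Open Scope R_scope.

Lemma sqrt5_facts : sqrt 5 * sqrt 5 = 5 /\ 2 < sqrt 5 < 3.
Proof.
  assert (H : sqrt 5 * sqrt 5 = 5) by (apply sqrt_sqrt; lra).
  assert (H0 : 0 <= sqrt 5) by apply sqrt_pos.
  split; [exact H|]. split; nra.
Qed.

Lemma tau_sq : tau * tau = 1 - tau.
Proof. destruct sqrt5_facts as [H _]. unfold tau. nra. Qed.

Lemma tau_bounds : 1/2 < tau < 1.
Proof. destruct sqrt5_facts as [_ H]. unfold tau. lra. Qed.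

Lemma tau_pos : 0 < tau.
Proof. pose proof tau_bounds. lra. Qed.

Lemma tau_neq0 : tau <> 0.
Proof. pose proof tau_pos. lra. Qed.

Lemma tau_inv : / tau = 1 + tau.
Proof.
  pose proof tau_sq. pose proof tau_neq0.
  field_simplify_eq; [|exact H0]. lra.
Qed.

Lemma pw_pos e : 0 < powerRZ tau e.
Proof. apply powerRZ_lt, tau_pos. Qed.

Lemma pw_add e1 e2 : powerRZ tau (e1 + e2) = powerRZ tau e1 * powerRZ tau e2.
Proof. apply powerRZ_add, tau_neq0. Qed.

Lemma pw_inv e : powerRZ tau (- e) * powerRZ tau e = 1.
Proof. rewrite <- pw_add. replace (- e + e)%Z with 0%Z by lia. apply powerRZ_O. Qed.

Lemma Z_int m : inZtau (IZR m).
Proof. exists m, 0%Z. ring. Qed.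

Lemma Z_tau : inZtau tau.
Proof. exists 0%Z, 1%Z. ring. Qed.

Lemma Z_add x y : inZtau x -> inZtau y -> inZtau (x + y).
Proof.
  intros [m1 [n1 ->]] [m2 [n2 ->]]. exists (m1 + m2)%Z, (n1 + n2)%Z.
  rewrite !plus_IZR. ring.
Qed.

Lemma Z_opp x : inZtau x -> inZtau (- x).
Proof.
  intros [m1 [n1 ->]]. exists (- m1)%Z, (- n1)%Z. rewrite !opp_IZR. ring.
Qed.

Lemma Z_sub x y : inZtau x -> inZtau y -> inZtau (x - y).
Proof. intros. unfold Rminus. apply Z_add; auto. apply Z_opp; auto. Qed.

Lemma Z_mul x y : inZtau x -> inZtau y -> inZtau (x * y).
Proof.
  intros [m1 [n1 ->]] [m2 [n2 ->]].
  exists (m1 * m2 + n1 * n2)%Z, (m1 * n2 + n1 * m2 - n1 * n2)%Z.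
  rewrite !minus_IZR, !plus_IZR, !mult_IZR.
  pose proof tau_sq.
  assert (IZR n1 * IZR n2 * (tau * tau - (1 - tau)) = 0) by (rewrite H; ring).
  nra.
Qed.

Lemma Z_pow e : inZtau (powerRZ tau e).
Proof.
  assert (Hn : forall n, inZtau (tau ^ n)).
  { induction n; simpl. apply (Z_int 1). apply Z_mul; auto. apply Z_tau. }
  assert (Hm : forall n, inZtau ((1 + tau) ^ n)).
  { induction n; simpl. apply (Z_int 1). apply Z_mul; auto. apply Z_add. apply (Z_int 1). apply Z_tau. }
  destruct e; simpl. apply (Z_int 1). apply Hn.
  rewrite <- pow_inv, tau_inv. apply Hm.
Qed.

Lemma Z_0 : inZtau 0.
Proof. apply (Z_int 0). Qed.
Lemma Z_1 : inZtau 1.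
Proof. apply (Z_int 1). Qed.

Definition PRd (f : R -> R) (k : nat) (p : nat -> R) (e : nat -> Z) : Prop :=
  (forall i, (i < k)%nat -> p i < p (S i)) /\
  (forall i, (i <= k)%nat -> inZtau (p i)) /\
  (forall i x, (i < k)%nat -> p i <= x <= p (S i) ->
        f x = f (p i) + powerRZ tau (e i) * (x - p i)).

Lemma p_mono (p : nat -> R) k : (forall i, (i < k)%nat -> p i < p (S i)) ->
  forall i j, (i < j <= k)%nat -> p i < p j.
Proof.
  intros H i j. induction j; intros Hij. lia.
  destruct (Nat.eq_dec i j) as [->|Hn]. apply H; lia.
  apply Rlt_trans with (p j). apply IHj; lia. apply H; lia.
Qed.

Lemma p_mono_le (p : nat -> R) k : (forall i, (i < k)%nat -> p i < p (S i)) ->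
  forall i j, (i <= j <= k)%nat -> p i <= p j.
Proof.
  intros H i j Hij. destruct (Nat.eq_dec i j) as [->|Hn]. lra.
  left. apply (p_mono p k H). lia.
Qed.

Lemma find_cell (p : nat -> R) k : (forall i, (i < k)%nat -> p i < p (S i)) ->
  forall x, p 0%nat <= x < p k -> exists i, (i < k)%nat /\ p i <= x < p (S i).
Proof.
  induction k; intros H x Hx. lra.
  destruct (Rlt_le_dec x (p k)) as [Hl|Hl].
  - destruct (IHk (fun i Hi => H i (Nat.lt_lt_succ_r _ _ Hi)) x) as [i [Hi1 Hi2]]. lra.
    exists i. split; [lia|lra].
  - exists k. split; [lia|lra].
Qed.

Lemma find_cell2 (p : nat -> R) k : (forall i, (i < k)%nat -> p i < p (S i)) ->
  forall x, p 0%nat < x <= p k -> exists i, (i < k)%nat /\ p i < x <= p (S i).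
Proof.
  induction k; intros H x Hx. lra.
  destruct (Rle_lt_dec x (p k)) as [Hl|Hl].
  - destruct (IHk (fun i Hi => H i (Nat.lt_lt_succ_r _ _ Hi)) x) as [i [Hi1 Hi2]]. lra.
    exists i. split; [lia|lra].
  - exists k. split; [lia|lra].
Qed.

Section PRdLemmas.
Variables (f : R -> R) (k : nat) (p : nat -> R) (e : nat -> Z).
Hypothesis Hd : PRd f k p e.

Lemma fp_step i : (i < k)%nat -> f (p (S i)) = f (p i) + powerRZ tau (e i) * (p (S i) - p i).
Proof. destruct Hd as [H1 [H2 H3]]. intros Hi. apply H3; auto. pose proof (H1 i Hi). lra. Qed.

Lemma fp_incr i : (i < k)%nat -> f (p i) < f (p (S i)).
Proof.
  intros Hi. rewrite (fp_step i Hi). destruct Hd as [H1 _].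
  pose proof (H1 i Hi). pose proof (pw_pos (e i)). nra.
Qed.

Lemma fp_Z : inZtau (f (p 0%nat)) -> forall i, (i <= k)%nat -> inZtau (f (p i)).
Proof.
  intros H0 i. induction i; intros Hi; auto.
  rewrite fp_step by lia. destruct Hd as [_ [H2 _]].
  apply Z_add. apply IHi; lia. apply Z_mul. apply Z_pow. apply Z_sub; apply H2; lia.
Qed.

Lemma f_mono x y : p 0%nat <= x -> x < y -> y <= p k -> f x < f y.
Proof.
  intros Hx Hxy Hy. destruct Hd as [H1 [H2 H3]].
  destruct (find_cell p k H1 x) as [i [Hi Hxi]]. lra.
  destruct (find_cell2 p k H1 y) as [j [Hj Hyj]]. lra.
  assert (Hs : forall l, (l < k)%nat -> forall u v, p l <= u -> u < v -> v <= p (S l) -> f u < f v).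
  { intros l Hl u v Hu Huv Hv. rewrite (H3 l u Hl), (H3 l v Hl) by lra.
    pose proof (pw_pos (e l)). nra. }
  destruct (Nat.lt_trichotomy i j) as [Hij|[->|Hij]].
  - apply Rlt_le_trans with (f (p (S i))).
    apply Hs with i; try lra; auto.
    apply Rle_trans with (f (p j)).
    + assert (Hm : forall m, (S i <= m <= j)%nat -> f (p (S i)) <= f (p m)).
      { induction m; intros Hm. lia. destruct (Nat.eq_dec (S i) (S m)) as [<-|Hn]. lra.
        apply Rle_trans with (f (p m)). apply IHm; lia. left. apply fp_incr. lia. }
      apply Hm. lia.
    + left. apply Hs with j; auto; lra.
  - apply Hs with j; auto; lra.
  - exfalso. assert (p (S j) <= p i) by (apply (p_mono_le p k H1); lia). lra.
Qed.

Lemma f_mono_le x y : p 0%nat <= x -> x <= y -> y <= p k -> f x <= f y.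
Proof. intros. destruct (Req_dec x y) as [->|]. lra. left. apply f_mono; lra. Qed.

Lemma f_Z : inZtau (f (p 0%nat)) -> forall x, p 0%nat <= x <= p k -> inZtau x -> inZtau (f x).
Proof.
  intros H0 x Hx Hz. destruct Hd as [H1 [H2 H3]].
  destruct (Req_dec x (p k)) as [->|Hn]. apply fp_Z; auto.
  destruct (find_cell p k H1 x) as [i [Hi Hxi]]. lra.
  rewrite (H3 i x Hi) by lra. apply Z_add. apply fp_Z; auto; lia.
  apply Z_mul. apply Z_pow. apply Z_sub; auto. apply H2; lia.
Qed.

Lemma f_onto : inZtau (f (p 0%nat)) -> forall y, f (p 0%nat) <= y <= f (p k) ->
  exists x, p 0%nat <= x <= p k /\ f x = y /\ (inZtau y -> inZtau x).
Proof.
  intros H0 y Hy. pose proof Hd as Hd'. destruct Hd' as [H1 [H2 H3]].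
  destruct (Req_dec y (f (p k))) as [->|Hn].
  { exists (p k). split. split; [apply (p_mono_le p k H1); lia| lra]. split; auto.
    }
  destruct (find_cell (fun i => f (p i)) k fp_incr y) as [i [Hi Hyi]]. lra.
  exists (p i + powerRZ tau (- e i) * (y - f (p i))).
  pose proof (pw_inv (e i)). pose proof (pw_pos (e i)). pose proof (pw_pos (- e i)).
  pose proof (fp_step i Hi).
  assert (Hc : p i <= p i + powerRZ tau (- e i) * (y - f (p i)) <= p (S i)).
  { split. nra.
    assert (powerRZ tau (- e i) * (y - f (p i)) <= powerRZ tau (- e i) * (powerRZ tau (e i) * (p (S i) - p i))) by nra.
    nra. }
  split; [|split].
  - pose proof (p_mono_le p k H1 0 i). pose proof (p_mono_le p k H1 (S i) k). split.
    assert (p 0%nat <= p i) by (apply H7; lia). lra.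
    assert (p (S i) <= p k) by (apply H8; lia). lra.
  - rewrite (H3 i _ Hi Hc). 
    replace (powerRZ tau (e i) * (p i + powerRZ tau (- e i) * (y - f (p i)) - p i))
      with ((powerRZ tau (- e i) * powerRZ tau (e i)) * (y - f (p i))) by ring.
    rewrite H. ring.
  - intros Hz. apply Z_add. apply H2; lia. apply Z_mul. apply Z_pow. apply Z_sub; auto.
    apply fp_Z; auto; lia.
Qed.

End PRdLemmas.

Definition PLS (L : list R) (f : R -> R) (c d : R) : Prop :=
  forall x y, c <= x -> x < y -> y <= d -> (forall s, In s L -> ~ (x < s < y)) ->
    exists e : Z, forall z, x <= z <= y -> f z = f x + powerRZ tau e * (z - x).

Definition Sub (L : list R) (c d : R) (k : nat) (p : nat -> R) : Prop :=
  p 0%nat = c /\ p k = d /\ (forall i, (i < k)%nat -> p i < p (S i)) /\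
  (forall i, (i <= k)%nat -> inZtau (p i)) /\
  (forall i s, (i < k)%nat -> In s L -> ~ (p i < s < p (S i))).

Lemma sd_base L c d : c < d -> inZtau c -> inZtau d ->
  ~ (exists s, In s L /\ c < s < d) -> Sub L c d 1 (fun i => match i with O => c | _ => d end).
Proof.
  intros Hcd Hc Hd Hno. repeat split; auto.
  - intros i Hi. destruct i; [lra|lia].
  - intros i Hi. destruct i; auto.
  - intros i s Hi Hs Hs'. destruct i; [|lia]. apply Hno. exists s. split; auto.
Qed.

Lemma subdiv : forall n (L : list R), (length L <= n)%nat -> forall c d, c < d -> inZtau c -> inZtau d ->
  (forall s, In s L -> inZtau s) -> exists k p, Sub L c d k p.
Proof.
  induction n; intros L HL c d Hcd Hc Hd HLZ;
  (destruct (classic (exists s, In s L /\ c < s < d)) as [[s [Hs Hs']]|Hno];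
   [|exists 1%nat; eexists; apply sd_base; auto]).
  - destruct L; simpl in *; [contradiction|lia].
  - set (L' := remove Req_EM_T s L).
    assert (HL' : (length L' <= n)%nat).
    { pose proof (remove_length_lt Req_EM_T L s Hs). unfold L'. lia. }
    assert (HLZ' : forall s0, In s0 L' -> inZtau s0).
    { intros s0 H. apply in_remove in H. apply HLZ. tauto. }
    destruct (IHn L' HL' c s) as [k1 [p1 [A1 [B1 [C1 [D1 E1]]]]]]; auto; try lra.
    destruct (IHn L' HL' s d) as [k2 [p2 [A2 [B2 [C2 [D2 E2]]]]]]; auto; try lra.
    assert (Hk1 : (1 <= k1)%nat). { destruct k1. lra. lia. }
    assert (Hk2 : (1 <= k2)%nat). { destruct k2. lra. lia. }
    exists (k1 + k2)%nat, (fun i => if (i <=? k1)%nat then p1 i else p2 (i - k1)%nat).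
    set (p := fun i => if (i <=? k1)%nat then p1 i else p2 (i - k1)%nat).
    assert (P1 : forall i, (i <= k1)%nat -> p i = p1 i).
    { intros i Hi. unfold p. destruct (Nat.leb_spec i k1); [auto|lia]. }
    assert (P2 : forall i, (k1 <= i)%nat -> p i = p2 (i - k1)%nat).
    { intros i Hi. unfold p. destruct (Nat.leb_spec i k1). 
      replace i with k1 by lia. rewrite Nat.sub_diag. congruence. auto. }
    fold p.
    assert (M1 : forall i, (i <= k1)%nat -> p1 i <= s).
    { intros i Hi. rewrite <- B1. apply (p_mono_le p1 k1 C1). lia. }
    assert (M2 : forall i, (i <= k2)%nat -> s <= p2 i).
    { intros i Hi. rewrite <- A2. apply (p_mono_le p2 k2 C2). lia. }
    repeat split.
    + rewrite P1 by lia. auto.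
    + rewrite P2 by lia. replace (k1 + k2 - k1)%nat with k2 by lia. auto.
    + intros i Hi. destruct (Nat.lt_ge_cases i k1).
      * rewrite !P1 by lia. apply C1; lia.
      * rewrite !P2 by lia. replace (S i - k1)%nat with (S (i - k1)) by lia. apply C2; lia.
    + intros i Hi. destruct (Nat.le_ge_cases i k1).
      * rewrite P1 by lia. apply D1; lia.
      * rewrite P2 by lia. apply D2; lia.
    + intros i s0 Hi Hs0. destruct (Req_dec s0 s) as [->|Hne].
      * destruct (Nat.lt_ge_cases i k1).
        -- rewrite !P1 by lia. pose proof (M1 (S i)). intros [_ ?]. 
           assert (p1 (S i) <= s) by (apply M1; lia). lra.
        -- rewrite !P2 by lia. intros [? _]. assert (s <= p2 (i - k1)%nat) by (apply M2; lia). lra.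
      * assert (In s0 L') by (apply in_in_remove; auto).
        destruct (Nat.lt_ge_cases i k1).
        -- rewrite !P1 by lia. apply E1; auto.
        -- rewrite !P2 by lia. replace (S i - k1)%nat with (S (i - k1)) by lia. apply E2; auto; lia.
Qed.

Lemma S2P f c d L : c < d -> inZtau c -> inZtau d -> (forall s, In s L -> inZtau s) ->
  PLS L f c d -> exists k p e, p 0%nat = c /\ p k = d /\ PRd f k p e.
Proof.
  intros Hcd Hc Hd HLZ HP.
  destruct (subdiv (length L) L (le_n _) c d Hcd Hc Hd HLZ) as [k [p [A [B [C [D E]]]]]].
  assert (He : forall i, exists ei : Z, (i < k)%nat -> forall z, p i <= z <= p (S i) ->
             f z = f (p i) + powerRZ tau ei * (z - p i)).
  { intros i. destruct (Nat.lt_ge_cases i k) as [Hi|Hi].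
    - destruct (HP (p i) (p (S i))) as [ei Hei].
      + rewrite <- A. apply (p_mono_le p k C). lia.
      + apply C; auto.
      + rewrite <- B. apply (p_mono_le p k C). lia.
      + intros s Hs. apply E; auto.
      + exists ei. intros _. auto.
    - exists 0%Z. intros; lia. }
  exists k, p, (fun i => proj1_sig (constructive_indefinite_description _ (He i))).
  repeat split; auto.
  intros i x Hi Hx. destruct (constructive_indefinite_description _ (He i)) as [ei Hei]. simpl.
  apply Hei; auto.
Qed.

Lemma P2S f k p e : PRd f k p e ->
  PLS (map p (seq 0 (S k))) f (p 0%nat) (p k) /\
  (forall s, In s (map p (seq 0 (S k))) -> inZtau s /\ p 0%nat <= s <= p k).
Proof.
  intros Hd. pose proof Hd as [H1 [H2 H3]].
  assert (Hin : forall i, (i <= k)%nat -> In (p i) (map p (seq 0 (S k)))).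
  { intros i Hi. apply in_map. apply in_seq. lia. }
  split.
  - intros x y Hx Hxy Hy Hno.
    destruct (find_cell p k H1 x) as [i [Hi Hxi]]. lra.
    assert (Hyi : y <= p (S i)).
    { destruct (Rle_lt_dec y (p (S i))); auto. exfalso. apply (Hno (p (S i))). apply Hin; lia. lra. }
    exists (e i). intros z Hz. rewrite (H3 i z Hi), (H3 i x Hi) by lra. ring.
  - intros s Hs. apply in_map_iff in Hs. destruct Hs as [i [<- Hi]]. apply in_seq in Hi.
    split. apply H2; lia. split; apply (p_mono_le p k H1); lia.
Qed.

Definition PR (f : R -> R) (c d c' d' : R) : Prop :=
  c < d /\ f c = c' /\ f d = d' /\ inZtau c' /\
  exists k p e, p 0%nat = c /\ p k = d /\ PRd f k p e.

Lemma PR_PL f c d c' d' : PR f c d c' d' ->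
  exists L, (forall s, In s L -> inZtau s /\ c <= s <= d) /\ PLS L f c d.
Proof.
  intros [_ [_ [_ [_ [k [p [e [A [B Hd]]]]]]]]]. subst.
  destruct (P2S f k p e Hd). eauto.
Qed.

Lemma PL_PR f c d L : c < d -> inZtau c -> inZtau d -> inZtau (f c) ->
  (forall s, In s L -> inZtau s) -> PLS L f c d -> PR f c d (f c) (f d).
Proof.
  intros. destruct (S2P f c d L) as [k [p [e [A [B Hd]]]]]; auto.
  repeat split; auto. exists k, p, e. auto.
Qed.

Section PRprops.
Variables (f : R -> R) (c d c' d' : R).
Hypothesis HP : PR f c d c' d'.

Lemma PR_cZ : inZtau c /\ inZtau d /\ inZtau c' /\ inZtau d' /\ c < d.
Proof.
  destruct HP as [Hcd [Hc' [Hd' [HZ [k [p [e [A [B Hd]]]]]]]]].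
  pose proof Hd as [_ [H2 _]]. subst.
  repeat split; auto; first [apply H2; lia | apply (fp_Z f k p e Hd); auto].
Qed.

Lemma PR_mono x y : c <= x -> x < y -> y <= d -> f x < f y.
Proof.
  destruct HP as [Hcd [Hc' [Hd' [HZ [k [p [e [A [B Hd]]]]]]]]]. subst.
  apply (f_mono f k p e Hd).
Qed.

Lemma PR_mono_le x y : c <= x -> x <= y -> y <= d -> f x <= f y.
Proof. intros. destruct (Req_dec x y) as [->|]. lra. left. apply PR_mono; lra. Qed.

Lemma PR_range x : c <= x <= d -> c' <= f x <= d'.
Proof.
  intros. pose proof HP as [Hcd [Hc' [Hd' _]]]. rewrite <- Hc', <- Hd'. split; apply PR_mono_le; lra.
Qed.

Lemma PR_Z x : c <= x <= d -> inZtau x -> inZtau (f x).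
Proof.
  destruct HP as [Hcd [Hc' [Hd' [HZ [k [p [e [A [B Hd]]]]]]]]]. subst.
  apply (f_Z f k p e Hd); auto.
Qed.

Lemma PR_onto y : c' <= y <= d' -> exists x, c <= x <= d /\ f x = y /\ (inZtau y -> inZtau x).
Proof.
  destruct HP as [Hcd [Hc' [Hd' [HZ [k [p [e [A [B Hd]]]]]]]]]. subst.
  apply (f_onto f k p e Hd); auto.
Qed.

Lemma PR_inj x y : c <= x <= d -> c <= y <= d -> f x = f y -> x = y.
Proof.
  intros Hx Hy Hf. destruct (Rtotal_order x y) as [H|[H|H]]; auto.
  pose proof (PR_mono x y). lra. pose proof (PR_mono y x). lra.
Qed.

Lemma PR_preim : exists g : R -> R,
  (forall y, c' <= y <= d' -> c <= g y <= d /\ f (g y) = y) /\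
  (forall y, inZtau y -> inZtau (g y)) /\
  (forall x, c <= x <= d -> g (f x) = x).
Proof.
  assert (H : forall y, exists x, (c' <= y <= d' -> c <= x <= d /\ f x = y /\ (inZtau y -> inZtau x))
                              /\ (~ (c' <= y <= d') -> x = c)).
  { intros y. destruct (classic (c' <= y <= d')) as [Hy|Hy].
    - destruct (PR_onto y Hy) as [x Hx]. exists x. split; auto. tauto.
    - exists c. split; auto. tauto. }
  exists (fun y => proj1_sig (constructive_indefinite_description _ (H y))).
  pose proof PR_cZ as [HcZ _].
  split; [|split].
  - intros y Hy. destruct (constructive_indefinite_description _ (H y)) as [x Hx0]. simpl.
    destruct Hx0 as [Hx _]. destruct (Hx Hy) as [? [? _]]. auto.
  - intros y Hy. destruct (constructive_indefinite_description _ (H y)) as [x Hx0]. simpl.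
    destruct Hx0 as [Hx Hx'].
    destruct (classic (c' <= y <= d')) as [Hr|Hr]. apply Hx; auto. rewrite Hx'; auto.
  - intros x Hx. destruct (constructive_indefinite_description _ (H (f x))) as [x' Hx0]. simpl.
    destruct Hx0 as [Hx' _].
    destruct (Hx' (PR_range x Hx)) as [? [? _]]. apply PR_inj; auto.
Qed.

End PRprops.

Lemma PR_ext f g c d c' d' : PR f c d c' d' -> (forall x, c <= x <= d -> f x = g x) ->
  PR g c d c' d'.
Proof.
  intros HP Heq. destruct (PR_cZ f c d c' d' HP) as [Hc [Hd [Hc' [Hd' Hcd]]]].
  destruct (PR_PL f c d c' d' HP) as [L [HL HS]].
  pose proof HP as [_ [Hfc [Hfd _]]].
  assert (Hgc : g c = c') by (rewrite <- Heq by lra; auto).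
  assert (Hgd : g d = d') by (rewrite <- Heq by lra; auto).
  rewrite <- Hgc, <- Hgd.
  apply PL_PR with L; auto. congruence. intros s Hs; apply HL; auto.
  intros x y Hx Hxy Hy Hno. destruct (HS x y Hx Hxy Hy Hno) as [e He].
  exists e. intros z Hz. rewrite <- !Heq by lra. auto.
Qed.

Lemma PR_comp f g c d c' d' c'' d'' : PR f c d c' d' -> PR g c' d' c'' d'' ->
  PR (fun x => g (f x)) c d c'' d''.
Proof.
  intros Hf Hg.
  destruct (PR_cZ f c d c' d' Hf) as [Hc [Hd [Hc' [Hd' Hcd]]]].
  destruct (PR_cZ g c' d' c'' d'' Hg) as [_ [_ [Hc'' [Hd'' Hcd']]]].
  destruct (PR_PL f c d c' d' Hf) as [L1 [HL1 HS1]].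
  destruct (PR_PL g c' d' c'' d'' Hg) as [L2 [HL2 HS2]].
  destruct (PR_preim f c d c' d' Hf) as [fi [Hfi1 [Hfi2 Hfi3]]].
  pose proof Hf as [_ [Hfc [Hfd _]]]. pose proof Hg as [_ [Hgc [Hgd _]]].
  assert (E1 : g (f c) = c'') by congruence.
  assert (E2 : g (f d) = d'') by congruence.
  rewrite <- E1, <- E2.
  apply (PL_PR (fun x => g (f x)) c d (L1 ++ map fi L2)); auto. simpl; congruence.
  - intros s Hs. apply in_app_or in Hs. destruct Hs as [Hs|Hs]. apply HL1; auto.
    apply in_map_iff in Hs. destruct Hs as [t [<- Ht]]. apply Hfi2. apply HL2; auto.
  - intros x y Hx Hxy Hy Hno.
    destruct (HS1 x y Hx Hxy Hy) as [e1 He1].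
    { intros s Hs. apply Hno. apply in_or_app. auto. }
    assert (Hfxy : f x < f y) by (apply (PR_mono f c d c' d' Hf); lra).
    assert (Rx : c' <= f x <= d') by (apply (PR_range f c d c' d' Hf); lra).
    assert (Ry : c' <= f y <= d') by (apply (PR_range f c d c' d' Hf); lra).
    destruct (HS2 (f x) (f y)) as [e2 He2]; try lra.
    { intros t Ht Hti. destruct (Hfi1 t) as [Hr Hft]. lra.
      apply (Hno (fi t)). apply in_or_app. right. apply in_map. auto.
      split.
      - destruct (Rle_lt_dec (fi t) x); auto. 
        assert (f (fi t) <= f x) by (apply (PR_mono_le f c d c' d' Hf); lra). lra.
      - destruct (Rle_lt_dec y (fi t)); auto.
        assert (f y <= f (fi t)) by (apply (PR_mono_le f c d c' d' Hf); lra). lra. }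
    exists (e2 + e1)%Z. intros z Hz.
    assert (Hfz : f x <= f z <= f y) by (split; apply (PR_mono_le f c d c' d' Hf); lra).
    rewrite (He2 (f z) Hfz), (He1 z Hz), pw_add. ring.
Qed.

Lemma PR_glue f c m d c' m' d' : PR f c m c' m' -> PR f m d m' d' -> PR f c d c' d'.
Proof.
  intros H1 H2.
  destruct (PR_cZ f c m c' m' H1) as [Hc [Hm [Hc' [Hm' Hcm]]]].
  destruct (PR_cZ f m d m' d' H2) as [_ [Hd [_ [Hd' Hmd]]]].
  destruct (PR_PL f c m c' m' H1) as [L1 [HL1 HS1]].
  destruct (PR_PL f m d m' d' H2) as [L2 [HL2 HS2]].
  pose proof H1 as [_ [Hfc _]]. pose proof H2 as [_ [_ [Hfd _]]].
  rewrite <- Hfc, <- Hfd.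
  apply PL_PR with (L1 ++ L2 ++ m :: nil); auto; try lra; try congruence.
  - intros s Hs. repeat (apply in_app_or in Hs; destruct Hs as [Hs|Hs]).
    apply HL1; auto. apply HL2; auto. destruct Hs as [<-|[]]; auto.
  - intros x y Hx Hxy Hy Hno.
    assert (Hm0 : y <= m \/ m <= x).
    { destruct (Rle_lt_dec y m); auto. destruct (Rle_lt_dec m x); auto. exfalso.
      apply (Hno m). apply in_or_app; right; apply in_or_app; right; left; auto. lra. }
    destruct Hm0.
    + apply HS1; auto; try lra. intros s Hs. apply Hno. apply in_or_app; auto.
    + apply HS2; auto; try lra. intros s Hs. apply Hno. apply in_or_app; right; apply in_or_app; auto.
Qed.

Lemma PR_restrict f c d c' d' c1 d1 : PR f c d c' d' -> c <= c1 -> c1 < d1 -> d1 <= d ->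
  inZtau c1 -> inZtau d1 -> PR f c1 d1 (f c1) (f d1).
Proof.
  intros HP H1 H2 H3 Z1 Z2.
  destruct (PR_PL f c d c' d' HP) as [L [HL HS]].
  apply PL_PR with L; auto.
  - apply (PR_Z f c d c' d' HP); auto; lra.
  - intros s Hs; apply HL; auto.
  - intros x y Hx Hxy Hy Hno. apply HS; auto; lra.
Qed.

Lemma PR_affine c d c' e : c < d -> inZtau c -> inZtau d -> inZtau c' ->
  PR (fun x => c' + powerRZ tau e * (x - c)) c d c' (c' + powerRZ tau e * (d - c)).
Proof.
  intros Hcd Hc Hd Hc'.
  assert (H : PR (fun x => c' + powerRZ tau e * (x - c)) c d
     ((fun x => c' + powerRZ tau e * (x - c)) c) ((fun x => c' + powerRZ tau e * (x - c)) d)).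
  { apply (PL_PR (fun x => c' + powerRZ tau e * (x - c)) c d nil); auto.
    - simpl. replace (c' + powerRZ tau e * (c - c)) with c' by ring. auto.
    - intros s [].
    - intros x y _ _ _ _. exists e. intros z _. ring. }
  simpl in H. replace (c' + powerRZ tau e * (c - c)) with c' in H by ring. exact H.
Qed.

Lemma PR_id c d : c < d -> inZtau c -> inZtau d -> PR (fun x => x) c d c d.
Proof.
  intros. pose proof (PR_affine c d c 0 H H0 H1 H0).
  rewrite powerRZ_O in H2. replace (c + 1 * (d - c)) with d in H2 by ring.
  apply PR_ext with (1 := H2). intros; ring.
Qed.

Lemma PR_inv f c d c' d' : PR f c d c' d' -> exists g, PR g c' d' c d /\
  (forall x, c <= x <= d -> g (f x) = x) /\ (forall y, c' <= y <= d' -> f (g y) = y).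
Proof.
  intros Hf.
  destruct (PR_cZ f c d c' d' Hf) as [Hc [Hd [Hc' [Hd' Hcd]]]].
  destruct (PR_PL f c d c' d' Hf) as [L [HL HS]].
  destruct (PR_preim f c d c' d' Hf) as [g [Hg1 [Hg2 Hg3]]].
  pose proof Hf as [_ [Hfc [Hfd _]]].
  assert (Hcd' : c' < d') by (rewrite <- Hfc, <- Hfd; apply (PR_mono f c d c' d' Hf); lra).
  exists g. split; [|split; auto; intros; apply Hg1; auto].
  assert (Ec : g c' = c) by (rewrite <- Hfc; apply Hg3; lra).
  assert (Ed : g d' = d) by (rewrite <- Hfd; apply Hg3; lra).
  rewrite <- Ec, <- Ed.
  apply PL_PR with (map f L); auto; try (rewrite Ec; auto; fail).
  - intros s Hs. apply in_map_iff in Hs. destruct Hs as [t [<- Ht]].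
    apply (PR_Z f c d c' d' Hf); apply HL; auto.
  - intros y1 y2 Hy1 Hy12 Hy2 Hno.
    destruct (Hg1 y1) as [R1 F1]. lra. destruct (Hg1 y2) as [R2 F2]. lra.
    assert (Hx12 : g y1 < g y2).
    { destruct (Rle_lt_dec (g y2) (g y1)); auto.
      assert (f (g y2) <= f (g y1)) by (apply (PR_mono_le f c d c' d' Hf); lra). lra. }
    destruct (HS (g y1) (g y2)) as [e He]; try lra.
    { intros s Hs [Hs1 Hs2]. apply (Hno (f s)). apply in_map; auto.
      destruct (HL s Hs) as [_ Hsr].
      split; [rewrite <- F1|rewrite <- F2]; apply (PR_mono f c d c' d' Hf); lra. }
    exists (- e)%Z. intros w Hw.
    destruct (Hg1 w) as [Rw Fw]. lra.
    assert (Hgw : g y1 <= g w <= g y2).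
    { split.
      - destruct (Rle_lt_dec (g y1) (g w)); auto.
        assert (f (g w) < f (g y1)) by (apply (PR_mono f c d c' d' Hf); lra). lra.
      - destruct (Rle_lt_dec (g w) (g y2)); auto.
        assert (f (g y2) < f (g w)) by (apply (PR_mono f c d c' d' Hf); lra). lra. }
    pose proof (He (g w) Hgw) as Hw'. rewrite Fw, F1 in Hw'.
    replace (w - y1) with (powerRZ tau e * (g w - g y1)) by lra.
    replace (powerRZ tau (- e) * (powerRZ tau e * (g w - g y1)))
      with ((powerRZ tau (- e) * powerRZ tau e) * (g w - g y1)) by ring.
    rewrite pw_inv. ring.
Qed.

Definition Rel (L L' : R) : Prop := forall c c', inZtau c -> inZtau c' ->
  exists h, PR h c (c + L) c' (c' + L').

Lemma R_scale L e : 0 < L -> inZtau L -> Rel L (powerRZ tau e * L).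
Proof.
  intros HL HZ c c' Hc Hc'.
  exists (fun x => c' + powerRZ tau e * (x - c)).
  pose proof (PR_affine c (c + L) c' e) as H.
  replace (c + L - c) with L in H by ring. apply H; auto; try lra. apply Z_add; auto.
Qed.

Lemma R_trans L L' L'' : Rel L L' -> Rel L' L'' -> Rel L L''.
Proof.
  intros H1 H2 c c' Hc Hc'.
  destruct (H1 c 0 Hc Z_0) as [h1 P1]. destruct (H2 0 c' Z_0 Hc') as [h2 P2].
  exists (fun x => h2 (h1 x)). apply PR_comp with (0) (0 + L'); auto.
Qed.

Lemma R_add L1 L1' L2 L2' : Rel L1 L1' -> Rel L2 L2' -> inZtau L1 -> inZtau L1' ->
  Rel (L1 + L2) (L1' + L2').
Proof.
  intros H1 H2 Z1 Z1' c c' Hc Hc'.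
  destruct (H1 c c' Hc Hc') as [h1 P1].
  destruct (H2 (c + L1) (c' + L1')) as [h2 P2]; try (apply Z_add; auto).
  exists (fun x => if Rle_dec x (c + L1) then h1 x else h2 x).
  pose proof P1 as [_ [_ [E1 _]]]. pose proof P2 as [_ [E2 _]].
  pose proof (PR_cZ _ _ _ _ _ P1) as [_ [_ [_ [_ Hl1]]]].
  pose proof (PR_cZ _ _ _ _ _ P2) as [_ [_ [_ [_ Hl2]]]].
  rewrite <- !Rplus_assoc.
  apply PR_glue with (c + L1) (c' + L1').
  - apply PR_ext with (1 := P1). intros x Hx. destruct (Rle_dec x (c + L1)); auto. lra.
  - apply PR_ext with (1 := P2). intros x Hx. destruct (Rle_dec x (c + L1)); auto.
    replace x with (c + L1) by lra. congruence.
Qed.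

Definition Q x := Rel 1 x.

Lemma pw1 : powerRZ tau 1 = tau.
Proof. simpl. ring. Qed.
Lemma pw2 : powerRZ tau 2 = tau * tau.
Proof. simpl. ring. Qed.
Lemma pwm1 : powerRZ tau (-1) = 1 + tau.
Proof. simpl. rewrite Rmult_1_r. apply tau_inv. Qed.
Lemma pwm2 : powerRZ tau (-2) = 2 + tau.
Proof.
  replace (-2)%Z with (-1 + -1)%Z by lia. rewrite pw_add, pwm1.
  pose proof tau_sq. nra.
Qed.

Lemma Q_pow e : Q (powerRZ tau e).
Proof.
  unfold Q. replace (powerRZ tau e) with (powerRZ tau e * 1) by ring.
  apply R_scale. lra. apply Z_1.
Qed.

Lemma Q_add y z : Q y -> Q z -> inZtau y -> inZtau z -> Q (y + z).
Proof.
  intros Hy Hz Zy Zz. unfold Q.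
  pose proof tau_pos. pose proof tau_sq.
  assert (A : Rel tau y).
  { apply R_trans with 1; auto.
    assert (E : powerRZ tau (-1) * tau = 1) by (rewrite <- pw1 at 2; exact (pw_inv 1)).
    pose proof (R_scale tau (-1) H Z_tau) as Ht. rewrite E in Ht. exact Ht. }
  assert (B : Rel (tau * tau) z).
  { apply R_trans with 1; auto.
    assert (E : powerRZ tau (-2) * (tau * tau) = 1) by (rewrite <- pw2; exact (pw_inv 2)).
    assert (Hp : 0 < tau * tau) by nra.
    pose proof (R_scale (tau * tau) (-2) Hp (Z_mul _ _ Z_tau Z_tau)) as Ht. rewrite E in Ht. exact Ht. }
  replace 1 with (tau + tau * tau) by lra.
  apply R_add; auto. apply Z_tau.
Qed.

Lemma Q_unscale x e : 0 < x -> inZtau x -> Q (powerRZ tau e * x) -> Q x.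
Proof.
  intros Hx Zx H. unfold Q. apply R_trans with (powerRZ tau e * x); auto.
  assert (E : powerRZ tau (- e) * (powerRZ tau e * x) = x) by (rewrite <- Rmult_assoc, pw_inv; ring).
  assert (Hp : 0 < powerRZ tau e * x) by (pose proof (pw_pos e); nra).
  pose proof (R_scale _ (- e) Hp (Z_mul _ _ (Z_pow e) Zx)) as Ht. rewrite E in Ht. exact Ht.
Qed.

Lemma Z_INR n : inZtau (INR n).
Proof. rewrite INR_IZR_INZ. apply Z_int. Qed.

Lemma Q_nat n : Q (INR (S n)).
Proof.
  induction n.
  - simpl. rewrite <- (powerRZ_O tau). apply Q_pow.
  - rewrite S_INR. apply Q_add; auto. rewrite <- (powerRZ_O tau). apply Q_pow.
    apply Z_INR. apply Z_1.
Qed.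

Lemma Q_natT n : Q (INR (S n) * tau).
Proof.
  induction n.
  - simpl. rewrite Rmult_1_l, <- pw1. apply Q_pow.
  - rewrite S_INR, Rmult_plus_distr_r, Rmult_1_l. apply Q_add; auto. rewrite <- pw1. apply Q_pow.
    apply Z_mul. apply Z_INR. apply Z_tau. apply Z_tau.
Qed.

Lemma IZR_S m : (0 < m)%Z -> IZR m = INR (S (Z.to_nat m - 1)).
Proof. intros. rewrite INR_IZR_INZ. f_equal. lia. Qed.

Lemma Q_nn m n : (0 <= m)%Z -> (0 <= n)%Z -> (0 < m + n)%Z -> Q (IZR m + IZR n * tau).
Proof.
  intros Hm Hn Hmn.
  destruct (Z.eq_dec m 0) as [->|Hm0].
  - rewrite Rplus_0_l. rewrite IZR_S by lia. apply Q_natT.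
  - destruct (Z.eq_dec n 0) as [->|Hn0].
    + rewrite Rmult_0_l, Rplus_0_r. rewrite IZR_S by lia. apply Q_nat.
    + apply Q_add. rewrite IZR_S by lia. apply Q_nat. rewrite (IZR_S n) by lia. apply Q_natT.
      apply Z_int. apply Z_mul. apply Z_int. apply Z_tau.
Qed.

Lemma Zt_in m n : inZtau (IZR m + IZR n * tau).
Proof. exists m, n. auto. Qed.

Lemma PN : forall N m n, (0 < - n)%Z -> (- n <= Z.of_nat N)%Z ->
  0 < IZR m + IZR n * tau -> Q (IZR m + IZR n * tau).
Proof.
  induction N; intros m n Hn HN Hx. lia.
  pose proof tau_bounds as Tb. pose proof tau_sq as Ts.
  assert (Hn' : IZR n < 0) by (apply IZR_lt; lia).
  assert (Hm : (0 < m)%Z) by (apply lt_IZR; nra).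
  assert (H2 : (0 < 2 * m + n)%Z) by (apply lt_IZR; rewrite plus_IZR, mult_IZR; simpl; nra).
  apply Q_unscale with (-2)%Z; auto. apply Zt_in.
  replace (powerRZ tau (-2) * (IZR m + IZR n * tau))
    with (IZR (2 * m + n) + IZR (m + n) * tau)
    by (rewrite pwm2, !plus_IZR, mult_IZR; simpl; nra).
  destruct (Z_lt_le_dec (m + n) 0).
  - apply (IHN (2 * m + n)%Z (m + n)%Z); try lia.
    rewrite !plus_IZR, mult_IZR. simpl. nra.
  - apply Q_nn; lia.
Qed.

Lemma Q_pos m n : 0 < IZR m + IZR n * tau -> Q (IZR m + IZR n * tau).
Proof.
  intros Hx. pose proof tau_bounds as Tb. pose proof tau_sq as Ts.
  destruct (Z_lt_le_dec n 0).
  - apply (PN (Z.to_nat (- n))); auto; lia.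
  - destruct (Z_lt_le_dec m 0).
    + assert (Hm' : IZR m < 0) by (apply IZR_lt; lia).
      assert (Hmn : (0 < m + n)%Z) by (apply lt_IZR; rewrite plus_IZR; nra).
      apply Q_unscale with (-1)%Z; auto. apply Zt_in.
      replace (powerRZ tau (-1) * (IZR m + IZR n * tau))
        with (IZR (m + n) + IZR m * tau)
        by (rewrite pwm1, !plus_IZR; nra).
      apply (PN (Z.to_nat (- m))); try lia.
      rewrite plus_IZR. nra.
    + apply Q_nn; auto. destruct (Z.eq_dec (m + n) 0); [|lia].
      assert (m = 0%Z) by lia. assert (n = 0%Z) by lia. subst. simpl in Hx. lra.
Qed.

Lemma build_h a b : inZtau a -> inZtau b -> a < b -> exists h, PR h 0 1 a b.
Proof.
  intros [ma [na Ha]] [mb [nb Hb]] Hab.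
  assert (E : b - a = IZR (mb - ma) + IZR (nb - na) * tau) by (rewrite !minus_IZR; lra).
  assert (HQ : Q (b - a)) by (rewrite E; apply Q_pos; lra).
  destruct (HQ 0 a Z_0) as [h Hh]. { exists ma, na. auto. }
  exists h. replace 1 with (0 + 1) by ring. replace b with (a + (b - a)) by ring. auto.
Qed.

Lemma isF_PR f : isFtau f -> PR f 0 1 0 1.
Proof.
  intros [_ [H0 [H1 [k [p [e [A [B [C [D E]]]]]]]]]].
  repeat split; auto. lra. apply Z_0. exists k, p, e. repeat split; auto.
Qed.

Lemma PR_isF f : PR f 0 1 0 1 -> (forall x, x < 0 \/ 1 < x -> f x = x) -> isFtau f.
Proof.
  intros [_ [H0 [H1 [_ [k [p [e [A [B [C [D E]]]]]]]]]]] Hout.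
  split; auto. split; auto. split; auto. exists k, p, e. repeat split; auto.
Qed.

Lemma fix_ends a b h : 0 < a -> a < b -> b < 1 -> isFtau_ab a b h -> h a = a /\ h b = b.
Proof.
  intros Ha Hab Hb [[Hout [H0 [H1 [k [p [e [A [B [C [D E]]]]]]]]]] Hs].
  assert (Fx : forall x, x < a \/ b < x -> h x = x).
  { intros x Hx. destruct (Req_dec (h x) x); auto. apply Hs in H. lra. }
  split.
  - destruct (find_cell2 p k C a) as [i [Hi Hai]]. lra.
    set (z := (p i + a) / 2).
    assert (Hz : h z = z) by (apply Fx; unfold z; lra).
    assert (Hp : h (p i) = p i) by (apply Fx; lra).
    pose proof (E i z Hi) as Ez. rewrite Hz, Hp in Ez.
    assert (Hs1 : powerRZ tau (e i) = 1).
    { apply Rmult_eq_reg_r with (z - p i). rewrite Rmult_1_l. unfold z in *; lra. unfold z; lra. }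
    rewrite (E i a Hi) by lra. rewrite Hp, Hs1. ring.
  - destruct (find_cell p k C b) as [i [Hi Hbi]]. lra.
    set (z := (b + p (S i)) / 2).
    assert (Hz : h z = z) by (apply Fx; unfold z; lra).
    assert (Hp : h (p (S i)) = p (S i)) by (apply Fx; lra).
    assert (Ez : h z = h (p i) + powerRZ tau (e i) * (z - p i)) by (apply E; auto; unfold z; lra).
    rewrite Hz in Ez.
    assert (Ep : h (p (S i)) = h (p i) + powerRZ tau (e i) * (p (S i) - p i)) by (apply E; auto; lra).
    rewrite Hp in Ep.
    assert (Hs1 : powerRZ tau (e i) = 1).
    { apply Rmult_eq_reg_r with (p (S i) - z). rewrite Rmult_1_l. unfold z in *; lra. unfold z; lra. }
    rewrite Hs1 in Ez. rewrite (E i b Hi) by lra. rewrite Hs1. lra.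
Qed.

Definition Hf (a b : R) (h : R -> R) (x : R) : R :=
  if Rlt_dec x 0 then x + a else if Rle_dec x 1 then h x else x - 1 + b.
Definition Hi (a b : R) (g : R -> R) (y : R) : R :=
  if Rlt_dec y a then y - a else if Rle_dec y b then g y else y + 1 - b.

Theorem main (a b : R) :
  inZtau a -> inZtau b -> 0 < a -> a < b -> b < 1 ->
  exists phi : (R -> R) -> (R -> R), comp_group_iso isFtau (isFtau_ab a b) phi.
Proof.
  intros Za Zb Ha Hab Hb.
  destruct (build_h a b Za Zb Hab) as [h Hh].
  destruct (PR_inv h 0 1 a b Hh) as [g [Hg [Hgh Hhg]]].
  assert (hr : forall x, 0 <= x <= 1 -> a <= h x <= b) by (apply (PR_range h 0 1 a b Hh)).
  assert (gr : forall y, a <= y <= b -> 0 <= g y <= 1) by (apply (PR_range g a b 0 1 Hg)).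
  pose proof Hh as [_ [h0 [h1 _]]].
  assert (g0 : g a = 0) by (rewrite <- h0; apply Hgh; lra).
  assert (g1 : g b = 1) by (rewrite <- h1; apply Hgh; lra).
  set (HH := Hf a b h). set (HI := Hi a b g).
  assert (HIH : forall x, HI (HH x) = x).
  { intros x. unfold HH, HI, Hf, Hi.
    destruct (Rlt_dec x 0).
    - destruct (Rlt_dec (x + a) a). ring. lra.
    - destruct (Rle_dec x 1).
      + pose proof (hr x). destruct (Rlt_dec (h x) a). lra.
        destruct (Rle_dec (h x) b). apply Hgh; lra. lra.
      + destruct (Rlt_dec (x - 1 + b) a). lra. destruct (Rle_dec (x - 1 + b) b). lra. ring. }
  assert (HHI : forall y, HH (HI y) = y).
  { intros y. unfold HH, HI, Hf, Hi.
    destruct (Rlt_dec y a).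
    - destruct (Rlt_dec (y - a) 0). ring. lra.
    - destruct (Rle_dec y b).
      + pose proof (gr y). destruct (Rlt_dec (g y) 0). lra.
        destruct (Rle_dec (g y) 1). apply Hhg; lra. lra.
      + destruct (Rlt_dec (y + 1 - b) 0). lra. destruct (Rle_dec (y + 1 - b) 1). lra. ring. }
  assert (HHin : forall x, 0 <= x <= 1 -> HH x = h x).
  { intros x Hx. unfold HH, Hf. destruct (Rlt_dec x 0). lra. destruct (Rle_dec x 1). auto. lra. }
  assert (HIin : forall y, a <= y <= b -> HI y = g y).
  { intros y Hy. unfold HI, Hi. destruct (Rlt_dec y a). lra. destruct (Rle_dec y b). auto. lra. }
  assert (HHlo : forall x, x < 0 -> HH x = x + a).
  { intros x Hx. unfold HH, Hf. destruct (Rlt_dec x 0). auto. lra. }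
  assert (HHhi : forall x, 1 < x -> HH x = x - 1 + b).
  { intros x Hx. unfold HH, Hf. destruct (Rlt_dec x 0). lra. destruct (Rle_dec x 1). lra. auto. }
  assert (HIlo : forall y, y < a -> HI y = y - a).
  { intros y Hy. unfold HI, Hi. destruct (Rlt_dec y a). auto. lra. }
  assert (HIhi : forall y, b < y -> HI y = y + 1 - b).
  { intros y Hy. unfold HI, Hi. destruct (Rlt_dec y a). lra. destruct (Rle_dec y b). lra. auto. }
  assert (Z0 := Z_0). assert (Z1 := Z_1).
  exists (fun f x => HH (f (HI x))).
  split; [|split; [|split]].
  -
    intros f Hf0. pose proof (isF_PR f Hf0) as Pf. pose proof Hf0 as [fout [f0 [f1 _]]].
    assert (Out : forall x, x < a \/ b < x -> HH (f (HI x)) = x).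
    { intros x [Hx|Hx].
      - rewrite HIlo by auto. rewrite fout by lra. rewrite HHlo by lra. ring.
      - rewrite HIhi by auto. rewrite fout by lra. rewrite HHhi by lra. ring. }
    assert (In : forall x, a <= x <= b -> HH (f (HI x)) = h (f (g x))).
    { intros x Hx. rewrite HIin by auto. apply HHin.
      apply (PR_range f 0 1 0 1 Pf). apply gr; auto. }
    split.
    + apply PR_isF.
      * apply PR_glue with b b. apply PR_glue with a a.
        -- apply PR_ext with (1 := PR_id 0 a Ha Z0 Za). intros x Hx.
           destruct (Req_dec x a) as [->|Hn]. rewrite In by lra. rewrite g0, f0. auto.
           rewrite Out; auto. lra.
        -- apply PR_ext with (fun x => h (f (g x))).
           apply PR_comp with 0 1; auto. apply PR_comp with 0 1; auto.
           intros x Hx. rewrite In; auto.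
        -- apply PR_ext with (1 := PR_id b 1 Hb Zb Z1). intros x Hx.
           destruct (Req_dec x b) as [->|Hn]. rewrite In by lra. rewrite g1, f1. auto.
           rewrite Out; auto. lra.
      * intros x Hx. apply Out. lra.
    + intros x Hx. destruct (Rlt_le_dec x a) as [H1|H1]. exfalso; apply Hx, Out; auto.
      destruct (Rle_lt_dec x b) as [H2|H2]. lra. exfalso; apply Hx, Out; auto.
  -
    intros f1 f2 _ _ Heq. apply functional_extensionality. intros x.
    pose proof (f_equal (fun F => HI (F (HH x))) Heq) as E. simpl in E.
    rewrite !HIH in E. exact E.
  -
    intros h' Hh'. pose proof (fix_ends a b h' Ha Hab Hb Hh') as [ha hb].
    pose proof Hh' as [Fh' Sh'].
    assert (Fx : forall x, x < a \/ b < x -> h' x = x).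
    { intros x Hx. destruct (Req_dec (h' x) x); auto. apply Sh' in H. lra. }
    pose proof (isF_PR h' Fh') as Ph.
    assert (Pab : PR h' a b a b).
    { pose proof (PR_restrict h' 0 1 0 1 a b Ph) as P. rewrite ha, hb in P. apply P; auto; lra. }
    exists (fun x => HI (h' (HH x))). split.
    + apply PR_isF.
      * apply PR_ext with (fun x => g (h' (h x))).
        apply PR_comp with a b; auto. apply PR_comp with a b; auto.
        intros x Hx. rewrite HHin by auto. rewrite HIin; auto.
        apply (PR_range h' a b a b Pab). apply hr; auto.
      * intros x [Hx|Hx].
        -- rewrite HHlo by auto. rewrite Fx by lra. rewrite HIlo by lra. ring.
        -- rewrite HHhi by auto. rewrite Fx by lra. rewrite HIhi by lra. ring.
    + apply functional_extensionality. intros y. rewrite !HHI. auto.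
  -
    intros f1 f2 _ _. apply functional_extensionality. intros x. rewrite HIH. auto.
Qed.

Theorem mainTheorem13 (a b : R) :
  inZtau a -> inZtau b -> 0 < a -> a < b -> b < 1 ->
  exists phi : (R -> R) -> (R -> R), comp_group_iso isFtau (isFtau_ab a b) phi.
Proof. exact (main a b). Qed.
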